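(* Let $G$ be a finite simple connected well-dominated graph of order at least $3$. If the Cartesian product $G \,\square\, H$ is well-dominated for some finite simple connected graph $H$ of order at least $2$, then the minimum degree of $G$ satisfies $\delta(G) \ge 2$.
   Context: A graph is well-dominated if every minimal (with respect to inclusion) dominating set is a minimum dominating set. The Cartesian product $G\,\square\, H$ has vertex set $V(G)\times V(H)$, with $(g_1,h_1)$ adjacent to $(g_2,h_2)$ iff either ($g_1=g_2$ and $h_1h_2\in E(H)$) or ($h_1=h_2$ and $g_1g_2\in E(G)$). *)

(* Defs.v *)
From mathcomp Require Import all_boot.
Set Implicit Arguments. Unset Strict Implicit. Unset Printing Implicit Defensive.

Definition simple_graph (V : finType) (e : rel V) : Prop :=
  symmetric e /\ irreflexive e.

Definition connected_graph (V : finType) (e : rel V) : Prop :=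
  forall x y : V, connect e x y.

Definition closed_nbhd (V : finType) (e : rel V) (v : V) : {set V} :=
  v |: [set u | e v u].

Definition dominating (V : finType) (e : rel V) (D : {set V}) : bool :=
  [forall v, [exists u in D, u \in closed_nbhd e v]].

Definition minimal_dominating (V : finType) (e : rel V) (D : {set V}) : Prop :=
  dominating e D /\ forall D' : {set V}, D' \proper D -> ~~ dominating e D'.

Definition minimum_dominating (V : finType) (e : rel V) (D : {set V}) : Prop :=
  dominating e D /\ forall D' : {set V}, dominating e D' -> #|D| <= #|D'|.

Definition well_dominated (V : finType) (e : rel V) : Prop :=
  forall D : {set V}, minimal_dominating e D -> minimum_dominating e D.

Definition cart_prod (V W : finType) (e : rel V) (f : rel W) : rel (V * W) :=
  fun p q => ((p.1 == q.1) && f p.2 q.2) || ((p.2 == q.2) && e p.1 q.1).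

Definition degree (V : finType) (e : rel V) (v : V) : nat := #|[set u | e v u]|.

Definition min_degree_ge (V : finType) (e : rel V) (k : nat) : Prop :=
  forall v : V, k <= degree e v.

(* Main.v *)
Require Import Defs.
From mathcomp Require Import all_boot.
From mathcomp Require Import zify.

Set Implicit Arguments. Unset Strict Implicit. Unset Printing Implicit Defensive.

Lemma in_cn (T : finType) (r : rel T) x y : (y \in closed_nbhd r x) = (y == x) || r x y.
Proof. by rewrite /closed_nbhd !inE. Qed.

Lemma has_nbr (T : finType) (r : rel T) : symmetric r -> connected_graph r ->
  forall x z : T, z != x -> exists y, r x y.
Proof.
move=> rs cn x z zx; case: (boolP [exists y, r x y]) => [/existsP //|/existsPn H]; exfalso.
have cl : closed r (pred1 x).
  move=> a c rac /=; apply/idP/idP => /eqP E; subst.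
  - by move: (H c); rewrite rac.
  - by move: (H a); rewrite rs rac.
have := closed_connect cl (cn x z); rewrite !inE eqxx => /esym/eqP E.
by rewrite E eqxx in zx.
Qed.

Lemma other_elem (T : finType) (b : T) : 2 <= #|T| -> exists z, z != b.
Proof.
move=> h; case: (boolP [exists z, z != b]) => [/existsP //|/existsPn H]; exfalso.
have : #|T| <= #|[set b]|.
  rewrite -cardsT; apply: subset_leq_card; apply/subsetP => z _.
  by move: (H z); rewrite negbK inE.
rewrite cards1; lia.
Qed.
Section GPart.
Variables (V : finType) (e : rel V).
Hypotheses (esym : symmetric e) (eirr : irreflexive e) (wd : well_dominated e) (cG : connected_graph e).
Variables (u v w : V).
Hypotheses (euv : e u v) (vleaf : forall x, e v x -> x = u) (euw : e u w) (wv : w != v).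

Definition cn x := closed_nbhd e x.
Definition dom_but (S : {set V}) := [forall x, (x != v) ==> [exists t in S, t \in cn x]].
Definition minprop (S : {set V}) := [forall X : {set V}, dominating e X ==> (#|S|.+1 <= #|X|)].
Definition cls (S : {set V}) := [&& u \notin S, v \notin S, dom_but S & minprop S].
Definition indep (K : {set V}) := [forall a, forall b, ((a \in K) && (b \in K)) ==> ~~ e a b].
Definition Nu := [set x | e u x].
Definition iso (S : {set V}) := [set d in S | ~~ e d u && [forall t in S, ~~ e d t]].
Definition meas (S : {set V}) := #|S :&: Nu| * (#|V|.+1) + (#|V| - #|iso S|).
Definition validb (S : {set V}) s :=
  [exists p, [&& e s p, p \notin S, p != u, ~~ e u p & [forall t in S, (t != s) ==> ~~ e t p]]].

Lemma uv : u != v. Proof. by apply/eqP => E; move: euv; rewrite E eirr. Qed.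
Lemma evu : e v u. Proof. by rewrite esym. Qed.

Lemma minimum_of (D : {set V}) : minimal_dominating e D -> forall X, dominating e X -> #|D| <= #|X|.
Proof. by move=> /wd [_ H]. Qed.

Lemma indepP K a b : indep K -> a \in K -> b \in K -> ~~ e a b.
Proof. by move=> /forallP /(_ a) /forallP /(_ b) /implyP H aK bK; apply: H; rewrite aK bK. Qed.

Lemma cls_exists : exists A, cls A.
Proof.
pose P (A : {set V}) := [&& u \notin A, v \notin A & indep A].
have Pw : P [set w].
  rewrite /P !inE; apply/and3P; split.
  - by apply/eqP => E; move: euw; rewrite E eirr.
  - by rewrite eq_sym.
  - by apply/forallP => a; apply/forallP => b; rewrite !inE; apply/implyP => /andP[/eqP -> /eqP ->]; rewrite eirr.
have [A maxA wA] := maxset_exists Pw.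
have /and3P [uA vA iA] := maxsetp maxA.
have wA' : w \in A by apply: (subsetP wA); rewrite inE.
have mx : forall x, x != u -> x != v -> x \notin A -> exists2 a, a \in A & e x a.
  move=> x xu xv xA.
  case: (boolP [exists a, (a \in A) && e x a]) => [/existsP [a /andP [aA ea]]|/existsPn H].
    by exists a.
  exfalso.
  have Px : P (x |: A).
    rewrite /P !inE negb_or eq_sym xu uA negb_or eq_sym xv vA /=.
    apply/forallP => a; apply/forallP => b; rewrite !inE; apply/implyP => /andP [ha hb].
    case/orP: ha => [/eqP ->|aA]; case/orP: hb => [/eqP ->|bA].
    - by rewrite eirr.
    - by move: (H b); rewrite bA.
    - by move: (H a); rewrite aA esym.
    - exact: indepP iA aA bA.
  have := maxsetsup maxA Px (subsetUr _ _) => E.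
  by move: xA; rewrite -E setU11.
have domx : forall x, x != v -> [exists t in A, t \in cn x].
  move=> x xv; case: (eqVneq x u) => [->|xu].
    by apply/existsP; exists w; rewrite wA' /cn in_cn euw orbT.
  case: (boolP (x \in A)) => xA.
    by apply/existsP; exists x; rewrite xA /cn in_cn eqxx.
  have [a aA ea] := mx x xu xv xA.
  by apply/existsP; exists a; rewrite aA /cn in_cn ea orbT.
have mdB : minimal_dominating e (v |: A).
  split.
    apply/forallP => x; case: (eqVneq x v) => [->|xv].
      by apply/existsP; exists v; rewrite !inE eqxx.
    have /existsP [t /andP [tA tc]] := domx x xv.
    by apply/existsP; exists t; rewrite inE tA orbT.
  move=> D' /properP [sub [b bB bD]].
  apply/negP => /forallP /(_ b) /existsP [t /andP [tD tc]].
  have tB : t \in v |: A by apply: (subsetP sub).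
  move: tc; rewrite in_cn; case/orP => [/eqP E|ebt]; first by subst; rewrite tD in bD.
  move: bB tB; rewrite !inE => /orP [/eqP Eb|bA] /orP [/eqP Et|tA].
  - by subst; rewrite eirr in ebt.
  - by subst; move: (vleaf ebt) => E; subst; rewrite tA in uA.
  - by subst; move: ebt; rewrite esym => /vleaf E; subst; rewrite bA in uA.
  - by move: (indepP iA bA tA); rewrite ebt.
have mB := minimum_of mdB.
exists A; rewrite /cls uA vA /=; apply/andP; split.
  by apply/forallP => x; apply/implyP; apply: domx.
apply/forallP => X; apply/implyP => dX; move: (mB X dX).
by rewrite cardsU1 vA.
Qed.


Lemma domP (D : {set V}) x : dominating e D -> exists2 t, t \in D & t \in cn x.
Proof. by move=> /forallP /(_ x) /existsP [t /andP [tD tc]]; exists t. Qed.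

Lemma dom_butP S x : dom_but S -> x != v -> exists2 t, t \in S & t \in cn x.
Proof. by move=> /forallP /(_ x) /implyP H /H /existsP [t /andP [tD tc]]; exists t. Qed.

Lemma cn_sym x y : (x \in cn y) = (y \in cn x).
Proof. by rewrite /cn !in_cn eq_sym esym. Qed.

Ltac gen_lia := repeat match goal with H : _ |- _ => clear H end; lia.

Lemma meas_lt1 (a a2 n i i2 : nat) : a < a2 -> a * n.+1 + (n - i) < a2 * n.+1 + (n - i2).
Proof.
move=> h; have : a.+1 * n.+1 <= a2 * n.+1 by rewrite leq_mul2r h orbT.
rewrite mulSn; lia.
Qed.

Lemma meas_lt2 (a a2 n i i2 : nat) : a <= a2 -> i2 < i -> i <= n -> a * n.+1 + (n - i) < a2 * n.+1 + (n - i2).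
Proof.
move=> h1 h2 h3; have : a * n.+1 <= a2 * n.+1 by rewrite leq_mul2r h1 orbT.
lia.
Qed.

Lemma improve S s : cls S -> s \in S -> ~~ validb S s -> exists S', cls S' /\ meas S < meas S'.
Proof.
move=> cS sS nv; have /and4P [uS vS dS mS] := cS.
have mSX : forall X, dominating e X -> #|S|.+1 <= #|X|.
  by move=> X dX; move: mS => /forallP /(_ X) /implyP; apply.
have su : s != u by apply/eqP => E; move: uS; rewrite -E sS.
have sv : s != v by apply/eqP => E; move: vS; rewrite -E sS.
have Fp : forall y, y \in cn s -> (forall t, t \in S -> t != s -> t \notin cn y) ->
    ~~ e y u -> y != u -> y = s.
  move=> y ys H yu1 yu2; apply/eqP; apply/negPn/negP => ysn.
  move/negP: nv; apply; apply/existsP; exists y.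
  have esy : e s y by move: ys; rewrite /cn in_cn (negbTE ysn).
  apply/and5P; split => //.
  - apply/negP => yS; move: (H y yS ysn); rewrite /cn in_cn eqxx //.
  - by rewrite esym.
  - apply/forall_inP => t tS; apply/implyP => ts; move: (H t tS ts).
    by rewrite /cn in_cn negb_or esym => /andP [].
have ndD : ~~ dominating e ((S :\ s) :|: [set u]).
  apply/negP => dD; move: (mSX _ dD).
  rewrite cardsU cards1 (cardsD1 s S) sS; gen_lia.
have [x Hx] : exists x, forall t, t \in (S :\ s) :|: [set u] -> t \notin cn x.
  move/forallPn: ndD => [x /existsPn Hx]; exists x => t tD.
  by move: (Hx t); rewrite tD.
have xux : u \notin cn x by apply: Hx; rewrite !inE eqxx orbT.
have xv : x != v.
  by apply/eqP => E; move: xux; rewrite E /cn in_cn evu orbT.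
have HS : forall t, t \in S -> t != s -> t \notin cn x.
  by move=> t tS ts; apply: Hx; rewrite !inE ts tS.
have [t0 t0S t0c] := dom_butP dS xv.
have t0s : t0 = s by apply/eqP; apply/negPn/negP => ts; move: (HS t0 t0S ts); rewrite t0c.
subst t0.
have xs : x = s.
  apply: Fp => //; first by rewrite cn_sym.
  - by move: xux; rewrite /cn in_cn negb_or => /andP [].
  - by move: xux; rewrite /cn in_cn negb_or eq_sym => /andP [].
subst x.
have F1 : ~~ e s u by move: xux; rewrite /cn in_cn negb_or => /andP [].
have F2 : forall t, t \in S -> t != s -> ~~ e s t.
  by move=> t tS ts; move: (HS t tS ts); rewrite /cn in_cn negb_or => /andP [].
have Fq : forall y, e s y -> (forall t, t \in S -> t != s -> t \notin cn y) -> e u y.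
  move=> y esy H; apply/negPn/negP => nuy.
  have ys : y = s.
    apply: Fp => //; first by rewrite /cn in_cn esy orbT.
    - by rewrite esym.
    - by apply/eqP => E; move: esy; rewrite E (negbTE F1).
  by move: esy; rewrite ys eirr.
have sNu : s \notin Nu by rewrite inE esym.
clear Hx HS xux xv ndD Fp.
case: (boolP [exists y, e s y && [forall t in S, (t != s) ==> (t \notin cn y)]]).
- move=> /existsP [x0 /andP [esx0 Hx0]].
  pose Qp := [set y | [&& e s y, e u y & [forall t in S, (t != s) ==> (t \notin cn y)]]].
  have QpP : forall y, y \in Qp -> [/\ e s y, e u y & forall t, t \in S -> t != s -> t \notin cn y].
    move=> y; rewrite inE => /and3P [h1 h2 /forall_inP h3]; split => // t tS ts.
    by move: (h3 t tS) => /implyP; apply.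
  have x0Q : x0 \in Qp.
    rewrite inE esx0 Hx0 andbT /=; apply: Fq => // t tS ts.
    by move/forall_inP: Hx0 => /(_ t tS) /implyP; apply.
  pose PK (K : {set V}) := (K \subset Qp) && indep K.
  have PK0 : PK [set x0].
    rewrite /PK sub1set x0Q /=.
    by apply/forallP => a; apply/forallP => b; rewrite !inE; apply/implyP => /andP[/eqP -> /eqP ->]; rewrite eirr.
  have [K maxK x0K] := maxset_exists PK0.
  have /andP [KQ iK] := maxsetp maxK.
  have x0K' : x0 \in K by apply: (subsetP x0K); rewrite inE.
  have KP : forall k, k \in K -> [/\ e s k, e u k & forall t, t \in S -> t != s -> t \notin cn k].
    by move=> k kK; apply: QpP; apply: (subsetP KQ).
  have Kmax : forall y, y \in Qp -> exists2 k, k \in K & k \in cn y.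
    move=> y yQ; case: (boolP [exists k, (k \in K) && (k \in cn y)]) => [/existsP [k /andP [kK kc]]|/existsPn H].
      by exists k.
    exfalso.
    have Py : PK (y |: K).
      rewrite /PK subUset sub1set yQ KQ /=.
      apply/forallP => a; apply/forallP => b; rewrite !inE; apply/implyP => /andP [ha hb].
      case/orP: ha => [/eqP ->|aK]; case/orP: hb => [/eqP ->|bK].
      - by rewrite eirr.
      - by move: (H b); rewrite bK /cn in_cn negb_or => /andP [].
      - by move: (H a); rewrite aK /cn in_cn negb_or esym => /andP [].
      - exact: indepP iK aK bK.
    have := maxsetsup maxK Py (subsetUr _ _) => E.
    by move: (H y); rewrite -{1}E setU11 /cn in_cn eqxx.
  have KS : forall k, k \in K -> k \notin S.
    move=> k kK; apply/negP => kS; have [h1 _ h3] := KP k kK.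
    have ks : k != s by apply/eqP => E; move: h1; rewrite E eirr.
    by move: (h3 k kS ks); rewrite /cn in_cn eqxx.
  have uK : u \notin K by apply/negP => /KP [_ h _]; rewrite eirr in h.
  have vK : v \notin K.
    apply/negP => /KP [h _ _]; move: h; rewrite esym => /vleaf E.
    by move: uS; rewrite -E sS.
  pose Z := (S :\ s) :|: K :|: [set v].
  have dZ : dominating e Z.
    apply/forallP => x; apply/existsP.
    case: (eqVneq x v) => [->|xv].
      by exists v; rewrite /cn in_cn !inE eqxx !orbT.
    case: (eqVneq x u) => [->|xu].
      by exists v; rewrite /cn in_cn !inE eqxx euv !orbT.
    have [t tS tc] := dom_butP dS xv.
    case: (eqVneq t s) => [Ets|ts]; last by exists t; rewrite tc andbT !inE ts tS.
    subst t.
    case: (eqVneq x s) => [->|xs].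
      by exists x0; rewrite /cn in_cn !inE x0K' esx0 !orbT.
    have esx : e s x by move: tc; rewrite cn_sym /cn in_cn (negbTE xs).
    case: (boolP [exists t, [&& t \in S, t != s & t \in cn x]]) => [/existsP [t1 /and3P [t1S t1s t1c]]|/existsPn H].
      by exists t1; rewrite t1c andbT !inE t1s t1S.
    have H' : forall t, t \in S -> t != s -> t \notin cn x.
      by move=> t1 t1S t1s; move: (H t1); rewrite t1S t1s.
    have xQ : x \in Qp.
      rewrite inE esx (Fq x esx H') /=; apply/forall_inP => t1 t1S; apply/implyP => t1s; exact: H'.
    have [k kK kc] := Kmax x xQ.
    by exists k; rewrite kc andbT !inE kK !orbT.
  have [Z0 minZ0 Z0Z] := minset_exists dZ.
  have dZ0 : dominating e Z0 := minsetp minZ0.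
  have mdZ0 : minimal_dominating e Z0.
    split => // D' /properP [sub [b bZ bD]]; apply/negP => dD'.
    have := minsetinf minZ0 dD' sub => E; by rewrite E bZ in bD.
  have mZ0 := minimum_of mdZ0.
  have inZ : forall t, t \in Z -> [\/ t \in S /\ t != s, t \in K | t = v].
    move=> t; rewrite !inE => /orP [/orP [/andP [ts tS]|tK]|/eqP ->].
    - by constructor 1.
    - by constructor 2.
    - by constructor 3.
  have vZ0 : v \in Z0.
    have [t tZ tc] := domP v dZ0.
    move: tc; rewrite /cn in_cn => /orP [/eqP <- //|/vleaf Et].
    have := subsetP Z0Z t tZ; rewrite Et => /inZ [[uS' _]|uK'|uv'].
    - by rewrite uS' in uS.
    - by rewrite uK' in uK.
    - by move: uv; rewrite uv' eqxx.
  have KZ0 : K \subset Z0.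
    apply/subsetP => k kK; have [t tZ tc] := domP k dZ0.
    have [h1 h2 h3] := KP k kK.
    have := subsetP Z0Z t tZ => /inZ [[tS ts]|tK|tv].
    - by move: (h3 t tS ts); rewrite tc.
    - move: tc; rewrite /cn in_cn => /orP [/eqP <- //|ekt].
      by move: (indepP iK kK tK); rewrite ekt.
    - move: tc; rewrite tv /cn in_cn => /orP [/eqP Evk|ekv].
        by move: vK; rewrite Evk kK.
      by move: ekv; rewrite esym => /vleaf Ek; move: uK; rewrite -Ek kK.
  pose S2 := Z0 :\ v.
  exists S2; split.
    rewrite /cls /S2 !inE eqxx /=; apply/and3P; split.
    - apply/negP => /andP [_ uZ0]; have := subsetP Z0Z u uZ0 => /inZ [[uS' _]|uK'|uv'].
      + by rewrite uS' in uS.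
      + by rewrite uK' in uK.
      + by move: uv; rewrite uv' eqxx.
    - apply/forallP => x; apply/implyP => xv.
      have [t tZ tc] := domP x dZ0.
      case: (eqVneq t v) => [Etv|tv].
        move: tc; rewrite Etv /cn in_cn eq_sym (negbTE xv) /= esym => /vleaf Ex.
        apply/existsP; exists x0.
        have x0Z0 : x0 \in Z0 by apply: (subsetP KZ0).
        have [_ h _] := KP x0 x0K'.
        have x0v : x0 != v by apply/eqP => E; move: vK; rewrite -E x0K'.
        by rewrite /cn in_cn Ex h orbT andbT !inE x0v x0Z0.
      by apply/existsP; exists t; rewrite tc andbT !inE tv tZ.
    - apply/forallP => X; apply/implyP => dX; move: (mZ0 X dX).
      by rewrite (cardsD1 v Z0) vZ0.
  apply: meas_lt1.
  pose R := (S :\ s) :\: Z0.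
  have c1 : #|Z0| <= #|(S :\ s) :&: Z0| + #|K| + 1.
    have sub : Z0 \subset ((S :\ s) :&: Z0) :|: K :|: [set v].
      apply/subsetP => t tZ0; have := subsetP Z0Z t tZ0.
      by rewrite !inE tZ0 => /orP [/orP [->|->]|->]; rewrite ?orbT.
    apply: (leq_trans (subset_leq_card sub)).
    rewrite cardsU cards1 cardsU; gen_lia.
  have c2 := mSX _ dZ0.
  have c3 := cardsD1 s S; rewrite sS in c3.
  have c4 := cardsID Z0 (S :\ s).
  have KN : K \subset S2 :&: Nu.
    apply/subsetP => k kK; have [_ h _] := KP k kK.
    rewrite !inE h andbT (subsetP KZ0 k kK) andbT.
    by apply/eqP => E; move: vK; rewrite -E kK.
  have c5 : S :&: Nu \subset ((S2 :&: Nu) :\: K) :|: R.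
    apply/subsetP => t; rewrite inE => /andP [tS tN].
    have ts : t != s by apply/eqP => E; move: sNu; rewrite -E tN.
    case: (boolP (t \in Z0)) => tZ0.
      have tv : t != v by apply/eqP => E; move: vS; rewrite -E tS.
      have tN' : e u t by move: tN; rewrite inE.
      have tK : t \notin K by apply/negP => tK; move: (KS t tK); rewrite tS.
      by rewrite !inE tv tZ0 tN' tK.
    by rewrite !inE ts tS tZ0 orbT.
  have c6 := subset_leq_card c5.
  have c7 : #|(S2 :&: Nu) :\: K| = #|S2 :&: Nu| - #|K|.
    by rewrite cardsD (setIidPr KN).
  have c8 := subset_leq_card KN.
  have c9 : #|((S2 :&: Nu) :\: K) :|: R| <= #|(S2 :&: Nu) :\: K| + #|R|.
    rewrite cardsU; gen_lia.
  rewrite /R in c6 c9; move: c1 c2 c3 c4 c6 c7 c8 c9; gen_lia.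
- move=> /existsPn HQ.
  have HQ' : forall y, e s y -> exists2 t, t \in S & (t != s) && (t \in cn y).
    move=> y esy; move: (HQ y); rewrite esy /= => /forall_inPn [t tS].
    by rewrite negb_imply negbK => H; exists t.
  have vs : v != s by rewrite eq_sym.
  have [y esy] := has_nbr esym cG vs.
  have ys : y != s by apply/eqP => E; move: esy; rewrite E eirr.
  have yS : y \notin S.
    by apply/negP => yS; move: (F2 y yS ys); rewrite esy.
  have yu : y != u by apply/eqP => E; move: F1; rewrite -E esy.
  have yv : y != v by apply/eqP => E; move: esy; rewrite E esym => /vleaf E'; move: su; rewrite E' eqxx.
  pose S3 := y |: (S :\ s).
  exists S3; split.
    rewrite /cls /S3 !inE (eq_sym u y) (negbTE yu) (eq_sym v y) (negbTE yv) (negbTE uS) (negbTE vS) !andbF /=.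
    apply/andP; split.
    - apply/forallP => x; apply/implyP => xv.
      have [t tS tc] := dom_butP dS xv.
      case: (eqVneq t s) => [Ets|ts]; last first.
        by apply/existsP; exists t; rewrite tc andbT !inE ts tS orbT.
      subst t; case: (eqVneq x s) => [->|xs].
        by apply/existsP; exists y; rewrite /cn in_cn esy orbT andbT !inE eqxx.
      have esx : e s x by move: tc; rewrite cn_sym /cn in_cn (negbTE xs).
      have [t1 t1S /andP [t1s t1c]] := HQ' x esx.
      by apply/existsP; exists t1; rewrite t1c andbT !inE t1s t1S orbT.
    - apply/forallP => X; apply/implyP => dX; move: (mSX X dX).
      rewrite cardsU1 !inE negb_and ys yS orbT /= (cardsD1 s S) sS.
      by move=> h; apply: leq_trans h.
  apply: meas_lt2.
  - apply: subset_leq_card; apply/subsetP => t; rewrite !inE => /andP [tS tN].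
    have ts : t != s by apply/eqP => E; move: F1; rewrite -E esym tN.
    by rewrite tS ts tN orbT.
  - apply: proper_card; apply/properP; split.
      apply/subsetP => d; rewrite [d \in iso S3]inE => /andP [dS3 /andP [du /forall_inP dt]].
      move: dS3; rewrite /S3 in_setU1 => /orP [/eqP Ed|].
        subst d; have [t tS /andP [ts tc]] := HQ' y esy.
        have ty : t != y by apply/eqP => E; move: yS; rewrite -E tS.
        have eyt : e y t by move: tc; rewrite /cn in_cn (negbTE ty).
        have tS3 : t \in S3 by rewrite /S3 !inE ts tS orbT.
        by move: (dt t tS3); rewrite eyt.
      rewrite in_setD1 => /andP [ds dS'].
      rewrite inE dS' du /=; apply/forall_inP => t tS.
      case: (eqVneq t s) => [->|ts].
        by rewrite esym; apply: F2.
      by apply: dt; rewrite /S3 !inE ts tS orbT.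
    exists s.
      rewrite !inE sS F1 /=; apply/forall_inP => t tS.
      by case: (eqVneq t s) => [->|ts]; [rewrite eirr | apply: F2].
    apply/negP; rewrite !inE => /andP [/orP [/eqP E|/andP [ss _]] _].
      by move: ys; rewrite E eqxx.
    by move: ss; rewrite eqxx.
  - by rewrite max_card.
Qed.

Lemma good_S : exists S : {set V}, [/\ u \notin S, v \notin S, dom_but S & forall s, s \in S -> validb S s].
Proof.
have [A cA] := cls_exists.
case: (@arg_maxnP _ A cls meas cA) => S cS maxS.
have /and4P [uS vS dS _] := cS.
exists S; split => // s sS.
case: (boolP (validb S s)) => // nv; exfalso.
have [S' [cS' lt]] := improve cS sS nv.
by have := maxS S' cS'; rewrite /= leqNgt lt.
Qed.

End GPart.

Lemma prod_contra (V W : finType) (e : rel V) (f : rel W) (u v : V) (S : {set V}) (b b' : W) :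
  symmetric e -> irreflexive f -> e v u -> (forall x, e v x -> x = u) ->
  u \notin S -> v \notin S -> u != v ->
  (forall x, x != v -> exists2 t, t \in S & (t == x) || e x t) ->
  (forall s, s \in S -> exists p, [/\ e s p, p \notin S, p != u, ~~ e u p &
                                      forall t, t \in S -> t != s -> ~~ e t p]) ->
  f b b' -> well_dominated (cart_prod e f) -> False.
Proof.
move=> esym firr evu vleaf uS vS uv dS vP fbb wdc.
pose D1 := [set p : V * W | (p.1 \in S) || (p.1 == u)].
pose D2 := [set p : V * W | (p.1 \in S) || ((p.1 == v) && (p.2 != b))].
have cnP : forall (p q : V * W), (q \in closed_nbhd (cart_prod e f) p) =
   (q == p) || ((p.1 == q.1) && f p.2 q.2) || ((p.2 == q.2) && e p.1 q.1).
  by move=> p q; rewrite in_cn /cart_prod orbA.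
have dD1 : dominating (cart_prod e f) D1.
  apply/forallP => p; case: p => g h; apply/existsP.
  case: (eqVneq g v) => [->|gv].
    by exists (u, h); rewrite cnP /= !inE /= !eqxx evu !orbT.
  have [t tS tc] := dS g gv.
  exists (t, h); rewrite cnP /= !inE /= tS /=.
  case/orP: tc => [/eqP ->|egt]; first by rewrite eqxx.
  by rewrite !eqxx egt !orbT.
have mD1 : minimal_dominating (cart_prod e f) D1.
  split => // D' /properP [sub [[g h] gD1 gD']].
  apply/negP => /forallP dD'.
  have noD : forall q, q \in D' -> q != (g, h).
    by move=> q qD; apply/eqP => E; move: gD'; rewrite -E qD.
  move: gD1; rewrite inE /= => /orP [gS|/eqP gu].
  - have [p [esp pS pu nup Ht]] := vP g gS.
    have /existsP [q /andP [qD qc]] := dD' (p, h).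
    have := subsetP sub q qD; rewrite inE => qD1.
    move: qc; rewrite cnP /= => /orP [/orP [/eqP Eq|/andP [/eqP Ep _]]|/andP [/eqP Eh epq]].
    + by move: qD1; rewrite Eq /= (negbTE pS) (negbTE pu).
    + by move: qD1; rewrite -Ep (negbTE pS) (negbTE pu).
    + move: qD1 => /orP [q1S|/eqP q1u].
        case: (eqVneq q.1 g) => [q1g|q1g].
          by move: (noD q qD); rewrite [q]surjective_pairing q1g -Eh eqxx.
        by move: (Ht q.1 q1S q1g); rewrite esym epq.
      by move: nup; rewrite -q1u esym epq.
  - have /existsP [q /andP [qD qc]] := dD' (v, h).
    have := subsetP sub q qD; rewrite inE => qD1.
    move: qc; rewrite cnP /= => /orP [/orP [/eqP Eq|/andP [/eqP Ep _]]|/andP [/eqP Eh epq]].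
    + by move: qD1; rewrite Eq /= (negbTE vS) eq_sym (negbTE uv).
    + by move: qD1; rewrite -Ep (negbTE vS) eq_sym (negbTE uv).
    + move: (vleaf _ epq) => q1u.
      by move: (noD q qD); rewrite [q]surjective_pairing q1u -Eh gu eqxx.
have dD2 : dominating (cart_prod e f) D2.
  apply/forallP => p; case: p => g h; apply/existsP.
  case: (eqVneq g v) => [->|gv].
    case: (eqVneq h b) => [->|hb].
      exists (v, b'); rewrite cnP /= !inE /= !eqxx fbb /= orbT andbT.
      by apply/orP; right; apply/eqP => E; move: fbb; rewrite E firr.
    by exists (v, h); rewrite cnP /= !inE /= !eqxx hb orbT.
  have [t tS tc] := dS g gv.
  exists (t, h); rewrite cnP /= !inE /= tS /=.
  case/orP: tc => [/eqP ->|egt]; first by rewrite eqxx.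
  by rewrite !eqxx egt !orbT.
have := (wdc _ mD1).2 _ dD2.
have E1 : D1 = setX (u |: S) [set: W].
  by apply/setP => p; case: p => g h; rewrite !inE /= orbC andbT.
have E2 : D2 \subset setX S [set: W] :|: setX [set v] [set~ b].
  apply/subsetP => p; case: p => g h; rewrite !inE /= => /orP [->//|/andP [-> ->]].
  by rewrite orbT.
have c2 := subset_leq_card E2.
rewrite E1 cardsX cardsU1 uS cardsT.
move: c2; rewrite cardsU !cardsX cards1 cardsT cardsC1.
have : 0 < #|W| by apply/card_gt0P; exists b.
move: #|S| #|W| => a c.
clear; lia.
Qed.

Theorem corollary20 (V : finType) (e : rel V) :
  simple_graph e -> connected_graph e -> well_dominated e -> 3 <= #|V| ->
  (exists (W : finType) (f : rel W),
      [/\ simple_graph f, connected_graph f, 2 <= #|W|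
        & well_dominated (cart_prod e f)]) ->
  forall v : V, 2 <= degree e v.
Proof.
move=> [esym eirr] cG wd V3 [W [f [[fsym firr] fconn W2 wdc]]] v.
rewrite leqNgt; apply/negP => dv.
have [z zv] := other_elem v (ltnW V3).
have [u evu] := has_nbr esym cG zv.
have uv : u != v by apply/eqP => E; move: evu; rewrite E eirr.
have vleaf : forall x, e v x -> x = u.
  move=> x evx; apply/eqP; apply/negPn/negP => xu.
  have : #|[set u; x]| <= degree e v.
    apply: subset_leq_card; apply/subsetP => y; rewrite !inE.
    by case/orP => /eqP ->.
  by rewrite cards2 eq_sym xu; move: dv; clear; lia.
have euv : e u v by rewrite esym.
have [w [euw wv]] : exists w, e u w /\ w != v.
  case: (boolP [exists w, e u w && (w != v)]) => [/existsP [w /andP [h1 h2]]|/existsPn H].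
    by exists w.
  exfalso.
  have [z3 z3n] : exists z3, z3 \notin [set u; v].
    case: (boolP [exists z3, z3 \notin [set u; v]]) => [/existsP [z3 h]|/existsPn H3].
      by exists z3.
    have : #|V| <= #|[set u; v]|.
      rewrite -cardsT; apply: subset_leq_card; apply/subsetP => y _.
      by move: (H3 y); rewrite negbK.
    by rewrite cards2 uv; move: V3; clear; lia.
  have cl : closed e (mem [set u; v]).
    apply: intro_closed; first exact: sym_connect_sym.
    move=> x y exy; rewrite !inE => /orP [/eqP Ex|/eqP Ex]; subst x.
    - by move: (H y); rewrite exy /= negbK => ->; rewrite orbT.
    - by rewrite (vleaf y exy) eqxx.
  have := closed_connect cl (cG u z3).
  by rewrite !inE eqxx /= => E; move: z3n; rewrite !inE -E.
have [S [uS vS dS vP]] := good_S esym eirr wd cG euv vleaf euw wv.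
have [b _] : exists b : W, b \in W by apply/card_gt0P; apply: (leq_trans _ W2).
have [b0 b0b] := other_elem b W2.
have [b' fbb] := has_nbr fsym fconn b0b.
apply: (prod_contra esym firr evu vleaf uS vS uv _ _ fbb wdc).
- move=> x xv; move: dS => /forallP /(_ x) /implyP /(_ xv) /existsP [t /andP [tS tc]].
  by exists t => //; move: tc; rewrite /cn in_cn.
- move=> s sS; move: (vP s sS) => /existsP [p /and5P [h1 h2 h3 h4 /forall_inP h5]].
  exists p; split => // t tS ts; exact: (implyP (h5 t tS) ts).
Qed.
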